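(* Let $F_n\colon[0,+\infty)^2\to[0,+\infty)$, $n=1,2,\dots$, be functions converging uniformly on compact sets to a continuous function $F$. Then the following are equivalent: (1) for every $s,t\ge0$, $\lim_{n\to\infty}\big(F_n(s,t)-\inf_{s\le s',\,t\le t'}F_n(s',t')\big)=0$; (2) for every $D>0$, $\lim_{n\to\infty}\sup_{0\le s,t\le D}\big(F_n(s,t)-\inf_{s\le s',\,t\le t'}F_n(s',t')\big)=0$. *)

(* Defs.v *)
From Stdlib Require Import Reals Lra ClassicalEpsilon.
Open Scope R_scope.

Definition is_lower_bound (E : R -> Prop) (m : R) : Prop :=
  forall x, E x -> m <= x.
Definition is_glb (E : R -> Prop) (m : R) : Prop :=
  is_lower_bound E m /\ (forall b, is_lower_bound E b -> b <= m).

(* inf and sup of a set of reals (meaningful when they exist; chosen by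
   classical choice, arbitrary otherwise) *)
Definition Inf (E : R -> Prop) : R := epsilon (inhabits 0) (fun m => is_glb E m).
Definition Sup (E : R -> Prop) : R := epsilon (inhabits 0) (fun m => is_lub E m).

Definition upper_inf (f : R -> R -> R) (s t : R) : R :=
  Inf (fun y => exists s' t', s <= s' /\ t <= t' /\ y = f s' t').

Definition gap (f : R -> R -> R) (s t : R) : R := f s t - upper_inf f s t.

Definition sup_gap (f : R -> R -> R) (D : R) : R :=
  Sup (fun y => exists s t, 0 <= s <= D /\ 0 <= t <= D /\ y = gap f s t).

Definition continuous_on_quadrant (F : R -> R -> R) : Prop :=
  forall s t, 0 <= s -> 0 <= t -> forall eps, 0 < eps ->
    exists delta, 0 < delta /\
      forall s' t', 0 <= s' -> 0 <= t' -> Rabs (s' - s) < delta -> Rabs (t' - t) < delta ->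
        Rabs (F s' t' - F s t) < eps.

(* uniform convergence on compact subsets of [0,+oo)^2 (every compact subset
   is contained in some square [0,D]^2) *)
Definition unif_cv_compact (Fn : nat -> R -> R -> R) (F : R -> R -> R) : Prop :=
  forall D, 0 < D -> forall eps, 0 < eps -> exists N : nat, forall n : nat, (N <= n)%nat ->
    forall s t, 0 <= s <= D -> 0 <= t <= D -> Rabs (Fn n s t - F s t) < eps.

(* Main.v *)
Require Import Defs.
From Stdlib Require Import Reals.
From Stdlib Require Import Lra Lia List Classical ClassicalEpsilon.
From Coquelicot Require Import Coquelicot.
Open Scope R_scope.

Lemma Inf_glb (E : R -> Prop) : (exists x, E x) -> (exists m, is_lower_bound E m) ->
  is_glb E (Inf E).
Proof.
  intros [x0 Hx0] [m Hm]. unfold Inf. apply epsilon_spec.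
  destruct (completeness (fun x => E (- x))) as [l [Hl1 Hl2]].
  - exists (- m). intros y Hy. specialize (Hm _ Hy). lra.
  - exists (- x0). rewrite Ropp_involutive. exact Hx0.
  - exists (- l). split.
    + intros y Hy. assert (E (- - y)) by (rewrite Ropp_involutive; exact Hy).
      specialize (Hl1 _ H). lra.
    + intros b Hb. assert (l <= - b).
      { apply Hl2. intros y Hy. specialize (Hb _ Hy). lra. }
      lra.
Qed.

Lemma Sup_lub (E : R -> Prop) : (exists x, E x) -> bound E -> is_lub E (Sup E).
Proof.
  intros Hne Hb. unfold Sup. apply epsilon_spec.
  destruct (completeness E Hb Hne) as [l Hl]. exists l; exact Hl.
Qed.

Section UI.
Variable f : R -> R -> R.
Hypothesis fpos : forall s t, 0 <= s -> 0 <= t -> 0 <= f s t.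

Lemma ui_glb s t : 0 <= s -> 0 <= t ->
  is_glb (fun y => exists s' t', s <= s' /\ t <= t' /\ y = f s' t') (upper_inf f s t).
Proof.
  intros hs ht. apply Inf_glb.
  - exists (f s t), s, t. repeat split; lra.
  - exists 0. intros y (s' & t' & h1 & h2 & ->). apply fpos; lra.
Qed.

Lemma ui_le s t s' t' : 0 <= s -> 0 <= t -> s <= s' -> t <= t' -> upper_inf f s t <= f s' t'.
Proof.
  intros hs ht h1 h2. destruct (ui_glb s t hs ht) as [H _]. apply H. exists s', t'. auto.
Qed.

Lemma ui_nonneg s t : 0 <= s -> 0 <= t -> 0 <= upper_inf f s t.
Proof.
  intros hs ht. destruct (ui_glb s t hs ht) as [_ H]. apply H.
  intros y (s' & t' & h1 & h2 & ->). apply fpos; lra.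
Qed.

Lemma ui_mono s0 t0 s t : 0 <= s0 -> 0 <= t0 -> s0 <= s -> t0 <= t ->
  upper_inf f s0 t0 <= upper_inf f s t.
Proof.
  intros h1 h2 h3 h4. destruct (ui_glb s t ltac:(lra) ltac:(lra)) as [_ H]. apply H.
  intros y (s' & t' & g1 & g2 & ->). apply ui_le; lra.
Qed.

Lemma gap_nonneg s t : 0 <= s -> 0 <= t -> 0 <= gap f s t.
Proof. intros. unfold gap. pose proof (ui_le s t s t). lra. Qed.

Lemma gap_le s t : 0 <= s -> 0 <= t -> gap f s t <= f s t.
Proof. intros. unfold gap. pose proof (ui_nonneg s t). lra. Qed.
End UI.

Lemma ev_list {A} (P : nat -> A -> Prop) (l : list A) :
  (forall a, In a l -> exists N, forall n, (N <= n)%nat -> P n a) ->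
  exists N, forall n, (N <= n)%nat -> forall a, In a l -> P n a.
Proof.
  induction l as [|x l IH]; intros H.
  - exists 0%nat. intros n _ a [].
  - destruct (H x (or_introl eq_refl)) as [N1 HN1].
    destruct IH as [N2 HN2]. { intros a Ha. apply H. right. exact Ha. }
    exists (Nat.max N1 N2). intros n Hn a [<-|Ha].
    + apply HN1. lia.
    + apply HN2; [lia|exact Ha].
Qed.

Lemma list_max {A} (g : A -> R) (l : list A) : exists M, forall a, In a l -> g a <= M.
Proof.
  induction l as [|x l [M HM]].
  - exists 0. intros a [].
  - exists (Rmax (g x) M). intros a [<-|Ha].
    + apply Rmax_l.
    + eapply Rle_trans; [apply HM; exact Ha| apply Rmax_r].
Qed.

Lemma cover (F : R -> R -> R) (Hcont : continuous_on_quadrant F) (D : R) (eps : R) :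
  0 < eps -> exists l : list (R * R * R), forall s t, 0 <= s <= D -> 0 <= t <= D ->
  exists u v d, In (u, v, d) l /\ 0 < d /\ 0 <= u <= D /\ 0 <= v <= D /\
    Rabs (s - u) < d / 2 /\ Rabs (t - v) < d / 2 /\
    (forall s' t', 0 <= s' -> 0 <= t' -> Rabs (s' - u) < d -> Rabs (t' - v) < d ->
       Rabs (F s' t' - F u v) < eps).
Proof.
  intros He.
  assert (Hd : forall p : R * (R * unit), {d : posreal | 0 <= fst p -> 0 <= fst (snd p) ->
     forall s' t', 0 <= s' -> 0 <= t' -> Rabs (s' - fst p) < d -> Rabs (t' - fst (snd p)) < d ->
       Rabs (F s' t' - F (fst p) (fst (snd p))) < eps}).
  { intros p. apply constructive_indefinite_description.
    destruct (classic (0 <= fst p /\ 0 <= fst (snd p))) as [[h1 h2]|hn].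
    - destruct (Hcont _ _ h1 h2 eps He) as [d [hd H]].
      exists (mkposreal d hd). intros _ _. exact H.
    - exists (mkposreal 1 Rlt_0_1). intros h1 h2. exfalso. tauto. }
  pose (delta := fun p => pos_div_2 (proj1_sig (Hd p))).
  pose proof (compactness_list 2 (0,(0,tt)) (D,(D,tt)) delta) as Hc.
  apply NNPP. intro Hneg. apply Hc. intros [l Hl]. apply Hneg.
  exists (map (fun p => (fst p, fst (snd p), pos (proj1_sig (Hd p)))) l).
  intros s t hs ht.
  destruct (Hl (s,(t,tt))) as [p [Hin [Hb Hcl]]]. { simpl. tauto. }
  destruct p as [u [v []]]. simpl in Hb, Hcl.
  exists u, v, (pos (proj1_sig (Hd (u,(v,tt))))).
  split.
  - apply (in_map (fun p => (fst p, fst (snd p), pos (proj1_sig (Hd p)))) l (u,(v,tt)) Hin).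
  - pose proof (cond_pos (proj1_sig (Hd (u,(v,tt))))).
    pose proof (proj2_sig (Hd (u,(v,tt)))) as HP. simpl in HP.
    unfold delta in Hcl. simpl in Hcl.
    repeat split; try lra; try tauto.
Qed.

Lemma F_bounded (F : R -> R -> R) (Hcont : continuous_on_quadrant F) D :
  exists M, forall s t, 0 <= s <= D -> 0 <= t <= D -> F s t <= M.
Proof.
  destruct (cover F Hcont D 1 Rlt_0_1) as [l Hl].
  destruct (list_max (fun x => F (fst (fst x)) (snd (fst x)) + 1) l) as [M HM].
  exists M. intros s t hs ht.
  destruct (Hl s t hs ht) as (u & v & d & Hin & hd & hu & hv & h1 & h2 & HF).
  specialize (HM _ Hin). simpl in HM.
  assert (Rabs (F s t - F u v) < 1).
  { apply HF; lra. }
  apply Rabs_def2 in H. lra.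
Qed.

Lemma Rmax_facts u d s : 0 < d -> 0 <= s -> Rabs (s - u) < d / 2 ->
  0 <= Rmax 0 (u - d/2) <= s /\ Rabs (Rmax 0 (u - d/2) - u) < d.
Proof.
  intros hd hs h. apply Rabs_def2 in h.
  unfold Rmax; destruct (Rle_dec 0 (u - d/2)); split; try split; try lra;
    try (apply Rabs_def1; lra).
Qed.

Theorem mainTheorem17 (Fn : nat -> R -> R -> R) (F : R -> R -> R)
  (Hpos : forall n s t, 0 <= s -> 0 <= t -> 0 <= Fn n s t)
  (Hcv : unif_cv_compact Fn F)
  (Hcont : continuous_on_quadrant F) :
  (forall s t, 0 <= s -> 0 <= t -> Un_cv (fun n => gap (Fn n) s t) 0) <->
  (forall D, 0 < D -> Un_cv (fun n => sup_gap (Fn n) D) 0).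
Proof.
  split.
  - intros H1 D HD eps Heps.
    set (e := eps / 10).
    assert (He : 0 < e) by (unfold e; lra).
    destruct (cover F Hcont D e He) as [l Hl].
    pose (q1 := fun x : R * R * R => Rmax 0 (fst (fst x) - snd x / 2)).
    pose (q2 := fun x : R * R * R => Rmax 0 (snd (fst x) - snd x / 2)).
    destruct (ev_list (fun n x => gap (Fn n) (q1 x) (q2 x) < e) l) as [N1 HN1].
    { intros x _. assert (0 <= q1 x) by apply Rmax_l. assert (0 <= q2 x) by apply Rmax_l.
      destruct (H1 _ _ H H0 e He) as [N HN]. exists N. intros n Hn.
      specialize (HN n ltac:(lia)). unfold R_dist in HN. rewrite Rminus_0_r in HN.
      apply Rabs_def2 in HN. lra. }
    destruct (Hcv D HD e He) as [N2 HN2].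
    exists (Nat.max N1 N2). intros n Hn.
    assert (Hub : forall y, (exists s t, 0 <= s <= D /\ 0 <= t <= D /\ y = gap (Fn n) s t) ->
                  y <= 5 * e).
    { intros y (s & t & hs & ht & ->).
      destruct (Hl s t hs ht) as (u & v & d & Hin & hd & hu & hv & h1 & h2 & HF).
      specialize (HN1 n ltac:(lia) _ Hin). unfold q1, q2 in HN1; simpl in HN1.
      destruct (Rmax_facts u d s hd ltac:(lra) h1) as [[a1 a2] a3].
      destruct (Rmax_facts v d t hd ltac:(lra) h2) as [[b1 b2] b3].
      set (x := Rmax 0 (u - d/2)) in *. set (z := Rmax 0 (v - d/2)) in *.
      assert (c1 : Rabs (F s t - F u v) < e).
      { apply HF; lra. }
      assert (c2 : Rabs (F x z - F u v) < e) by (apply HF; lra).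
      assert (c3 : Rabs (Fn n s t - F s t) < e) by (apply HN2; [lia|lra|lra]).
      assert (c4 : Rabs (Fn n x z - F x z) < e) by (apply HN2; [lia|lra|lra]).
      assert (m : upper_inf (Fn n) x z <= upper_inf (Fn n) s t)
        by (apply ui_mono; auto; lra).
      apply Rabs_def2 in c1, c2, c3, c4.
      unfold gap in *. lra. }
    assert (Hlub : is_lub (fun y => exists s t, 0 <= s <= D /\ 0 <= t <= D /\
                       y = gap (Fn n) s t) (sup_gap (Fn n) D)).
    { apply Sup_lub.
      - exists (gap (Fn n) 0 0), 0, 0. repeat split; lra.
      - exists (5 * e). exact Hub. }
    destruct Hlub as [Hl1 Hl2].
    assert (g0 : 0 <= gap (Fn n) 0 0) by (apply gap_nonneg; auto; lra).
    assert (s1 : gap (Fn n) 0 0 <= sup_gap (Fn n) D).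
    { apply Hl1. exists 0, 0. repeat split; lra. }
    assert (s2 : sup_gap (Fn n) D <= 5 * e) by (apply Hl2; exact Hub).
    unfold R_dist. apply Rabs_def1; unfold e in *; lra.
  - intros H2 s t hs ht eps Heps.
    set (D := Rmax 1 (Rmax s t)).
    assert (hD1 : 1 <= D) by apply Rmax_l.
    assert (hD2 : s <= D /\ t <= D).
    { split; eapply Rle_trans; [| apply Rmax_r | | apply Rmax_r];
        [apply Rmax_l | apply Rmax_r]. }
    destruct (F_bounded F Hcont D) as [M HM].
    destruct (Hcv D ltac:(lra) 1 Rlt_0_1) as [N0 HN0].
    destruct (H2 D ltac:(lra) eps Heps) as [N1 HN1].
    exists (Nat.max N0 N1). intros n Hn.
    specialize (HN1 n ltac:(lia)). unfold R_dist in HN1. rewrite Rminus_0_r in HN1.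
    apply Rabs_def2 in HN1.
    assert (Hlub : is_lub (fun y => exists s t, 0 <= s <= D /\ 0 <= t <= D /\
                       y = gap (Fn n) s t) (sup_gap (Fn n) D)).
    { apply Sup_lub.
      - exists (gap (Fn n) 0 0), 0, 0. repeat split; lra.
      - exists (M + 1). intros y (s' & t' & h1 & h2 & ->).
        pose proof (gap_le (Fn n) (Hpos n) s' t' ltac:(lra) ltac:(lra)).
        specialize (HN0 n ltac:(lia) s' t' h1 h2). apply Rabs_def2 in HN0.
        specialize (HM s' t' h1 h2). lra. }
    destruct Hlub as [Hl1 _].
    assert (gap (Fn n) s t <= sup_gap (Fn n) D).
    { apply Hl1. exists s, t. repeat split; lra. }
    pose proof (gap_nonneg (Fn n) (Hpos n) s t hs ht).
    unfold R_dist. rewrite Rminus_0_r. apply Rabs_def1; lra.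
Qed.
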